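(* Let $\gamma=(\gamma_1,\dots,\gamma_b)$ be a parallel map on $V=V_1\oplus\cdots\oplus V_b$, $V_i\cong(\mathbb F_2)^m$ with $m\ge4$, and $0\gamma=0$. Suppose every $\gamma_i$ is differentially $4$-uniform and satisfies $\hat n(\gamma_i)=0$. If $\gamma$ maps $\mathcal{LA}_U(W_1|W_2)$ onto a non-trivial partition $\mathcal L(W)$, then $W$ and $W_1$ are walls and $W=W_1=W_2$; in particular $\mathcal{LA}_U(W_1|W_2)$ is linear.
   Context: Let $b>1$, $n=mb$, $V=(\mathbb F_2)^n=V_1\oplus\cdots\oplus V_b$, $V_i\cong(\mathbb F_2)^m$. Permutations act on the right. A parallel map is $\gamma\in\mathrm{Sym}(V)$ with $(v_1\oplus\cdots\oplus v_b)\gamma=v_1\gamma_1\oplus\cdots\oplus v_b\gamma_b$, $\gamma_i\in\mathrm{Sym}(V_i)$. A wall is $\bigoplus_{i\in I}V_i$ with $\emptyset\ne I\subsetneq\{1,\dots,b\}$. For $f:(\mathbb F_2)^m\to(\mathbb F_2)^m$, $\hat f_a(x)=f(x+a)+f(x)$; $f$ is differentially $\delta$-uniform if $\delta=\max_{a\ne0,b}|\{x:\hat f_a(x)=b\}|$; and $\hat n(f)=\max_{a\ne0}|\{v\ne0: x\mapsto\langle\hat f_a(x),v\rangle \text{ is constant}\}|$ with $\langle\cdot,\cdot\rangle$ the standard dot product. A permutation maps $\mathcal A$ onto $\mathcal B$ if it sends the blocks of $\mathcal A$ exactly onto those of $\mathcal B$; trivial partitions are the singleton partition and $\{V\}$.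 $\mathcal L(W)=\{W+v:v\in V\}$. For a subspace $U$ of dimension $n-1$ and subspaces $W_1,W_2\subseteq U$, $\mathcal{LA}_U(W_1|W_2)=\{W_1+v:v\in U\}\cup\{(W_2+\bar v)+v:v\in U\}$ for any $\bar v\in V\setminus U$. *)

(* Defs.v *)
From HB Require Import structures.
From mathcomp Require Import all_boot all_order all_algebra all_fingroup.
Set Implicit Arguments. Unset Strict Implicit. Unset Printing Implicit Defensive.
Import GRing.Theory.
Local Open Scope ring_scope.

Notation blk m := 'rV['F_2]_m.
(* V = V_1 (+) ... (+) V_b, an element is the family of its b components *)
Notation VV b m := {ffun 'I_b -> 'rV['F_2]_m}.

Definition dotp m (u v : blk m) : 'F_2 := \sum_(j < m) u 0 j * v 0 j.

Definition fder m (f : blk m -> blk m) (a x : blk m) : blk m := f (x + a) + f x.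

Definition diff_delta m (f : blk m -> blk m) : nat :=
  \max_(a : blk m | a != 0%R) \max_(c : blk m) #|[set x : blk m | fder f a x == c]|.
Definition diff_uniform m (f : blk m -> blk m) (delta : nat) : Prop :=
  diff_delta f = delta.

Definition nhat m (f : blk m -> blk m) : nat :=
  \max_(a : blk m | a != 0%R)
     #|[set v : blk m | (v != 0%R) &&
         [forall x, forall y, dotp (fder f a x) v == dotp (fder f a y) v]]|.

Definition parmap b m (g : 'I_b -> {perm blk m}) (v : VV b m) : VV b m :=
  [ffun i => g i (v i)].

Definition wall b m (W : {vspace VV b m}) : Prop :=
  exists I : {set 'I_b}, [/\ I != set0, I != setT &
    forall v : VV b m, (v \in W) = [forall i, (i \notin I) ==> (v i == 0%R)]].

Definition coset b m (W : {vspace VV b m}) (v : VV b m) : {set VV b m} :=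
  [set (w + v)%R | w : VV b m in W].

Definition Lpart b m (W : {vspace VV b m}) : {set {set VV b m}} :=
  [set coset W v | v : VV b m].

(* LA_U(W1|W2), built with the given vbar (assumed outside U) *)
Definition LApart b m (U W1 W2 : {vspace VV b m}) (vbar : VV b m)
  : {set {set VV b m}} :=
  [set coset W1 v | v in U] :|: [set coset W2 (vbar + v) | v in U].

Definition trivial_part b m (P : {set {set VV b m}}) : bool :=
  (P == [set [set x] | x : VV b m]) || (P == [set setT]).

Definition maps_onto b m (f : VV b m -> VV b m) (A B : {set {set VV b m}}) : Prop :=
  [set f @: X | X : {set VV b m} in A] = B.

(* Main.v *)
Require Import Defs.
From HB Require Import structures.
From mathcomp Require Import all_boot all_order all_algebra all_fingroup all_field.
Set Implicit Arguments. Unset Strict Implicit. Unset Printing Implicit Defensive.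
Import GRing.Theory.
Lemma count_fibers (T T' : finType) (f : T -> T') (S : {set T}) (C : {set T'}) k :
  (forall x, x \in S -> f x \in C) ->
  (forall c, #|[set x in S | f x == c]| <= k) -> #|S| <= #|C| * k.
Proof.
move=> hSC hk.
rewrite -sum1_card (partition_big f (mem C)) //= -sum_nat_const.
apply: leq_sum => c _.
apply: leq_trans (hk c).
rewrite -sum1_card; apply: eq_leq; apply: eq_bigl => x; by rewrite !inE.
Qed.

Local Open Scope ring_scope.
Local Notation coset := Defs.coset.

Lemma F2_cases (c : 'F_2) : c = 0 \/ c = 1.
Proof. case: c => [[|[|n]] Hc]; [left|right|by []]; exact: val_inj. Qed.

Lemma addvv2 (V : lmodType 'F_2) (v : V) : v + v = 0.
Proof. by rewrite -[v]scale1r -scalerDl (_ : (1 + 1 : 'F_2) = 0) ?scale0r //; exact: val_inj. Qed.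

Lemma dim_addline (vT : vectType 'F_2) (K : {vspace vT}) y :
  y \notin K -> \dim (K + <[y]>)%VS = (\dim K).+1.
Proof.
move=> yK; have := dimv_sum_cap K <[y]>.
have -> : (K :&: <[y]> = 0)%VS.
  apply/eqP; rewrite -subv0; apply/subvP => x; rewrite memv_cap memv0.
  case/andP => xK /vlineP[k xk]; rewrite xk in xK *.
  case: (F2_cases k) xK => -> xK; first by rewrite scale0r.
  by rewrite scale1r (negbTE yK) in xK.
rewrite dimv0 addn0 dim_vline => ->.
have -> : y != 0 by apply: contraNneq yK => ->; rewrite mem0v.
by rewrite addn1.
Qed.

Lemma I2 (vT : vectType 'F_2) (K : {vspace vT}) y y' :
  (\dim K).+1 = \dim {:vT} -> y \notin K -> y' \notin K -> y + y' \in K.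
Proof.
move=> dK yK y'K.
have full : (K + <[y]> = fullv)%VS.
  by apply/eqP; rewrite eqEdim subvf dim_addline // dK leqnn.
have : y' \in (K + <[y]>)%VS by rewrite full memvf.
case/memv_addP => k kK [l /vlineP[c ->] e]; rewrite e in y'K *.
case: (F2_cases c) y'K => -> y'K; first by rewrite scale0r addr0 kK in y'K.
by rewrite scale1r addrC -addrA addvv2 addr0.
Qed.

Lemma dimblk' m : dim 'rV['F_2]_m = m.
Proof. rewrite -[RHS]mul1n; exact: dim_matrix. Qed.
Lemma dimblk m : \dim {: blk m} = m.
Proof. rewrite dimvf; exact: dimblk'. Qed.
Lemma dimV b m : \dim {: VV b m} = (m * b)%N.
Proof. rewrite dimvf /dim /= card_ord mulnC; congr (_ * _)%N. exact: dimblk'. Qed.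

Lemma dotpE m (u q : blk m) : dotp u q = (u *m q^T) 0 0.
Proof. by rewrite /dotp !mxE; apply: eq_bigr => j _; rewrite mxE. Qed.

Lemma dotpDl m (u v q : blk m) : dotp (u + v) q = dotp u q + dotp v q.
Proof. by rewrite !dotpE mulmxDl mxE. Qed.

Lemma orth m (B : {vspace blk m}) : B != fullv ->
  exists2 q : blk m, q != 0 & forall u, u \in B -> dotp u q = 0.
Proof.
move=> BF.
pose M := \matrix_(k < m, j < \dim B) (vbasis B)`_j 0 k.
pose phi : 'Hom(blk m, 'rV['F_2]_(\dim B)) := linfun (mulmxr M).
have dB : (\dim B < m)%N.
  rewrite ltn_neqAle; apply/andP; split.
    apply: contra BF => /eqP e; rewrite eqEdim subvf /= dimblk e leqnn //.
  by have := dimvS (subvf B); rewrite dimblk.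
have kerB : lker phi != 0%VS.
  apply/negP => /eqP k0.
  have := limg_ker_dim phi fullv; rewrite k0 capv0 dimv0 add0n dimblk => e.
  have : (\dim (phi @: fullv) <= \dim B)%N.
    apply: (leq_trans (dimvS (subvf _))); rewrite dimvf; exact: (eq_leq (dimblk' _)).
  by rewrite e leqNgt dB.
exists (vpick (lker phi)); first by rewrite vpick0.
have := memv_pick (lker phi); rewrite memv_ker lfunE /= => /eqP phi0.
move=> u /coord_vbasis ->.
rewrite dotpE mulmx_suml summxE big1 // => j _.
rewrite -scalemxAl mxE.
have : (vpick (lker phi) *m M) 0 j = 0 by rewrite phi0 mxE.
rewrite !mxE => h; apply/eqP; rewrite mulf_eq0; apply/orP; right; apply/eqP.
rewrite -[RHS]h; apply: eq_bigr => k _; rewrite !mxE mulrC.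
done.
Qed.

Lemma nhat0P m (f : blk m -> blk m) : nhat f = 0%N -> forall a q : blk m, a != 0 -> q != 0 ->
  ~ (forall x, dotp (fder f a x) q = dotp (fder f a 0) q).
Proof.
move=> h a q a0 q0 hc.
have : (#|[set v : blk m | (v != 0%R) &&
         [forall x, forall y, dotp (fder f a x) v == dotp (fder f a y) v]]| <= nhat f)%N.
  by rewrite /nhat; apply: (@leq_bigmax_cond _ (fun a : blk m => a != 0) _ a a0).
rewrite h leqn0 cards_eq0 => /eqP/setP/(_ q); rewrite !inE q0 /=.
move/negbT/negP; apply; apply/forallP => x; apply/forallP => y.
by rewrite hc (hc y).
Qed.

Lemma du4 m (f : blk m -> blk m) : diff_uniform f 4 -> forall a c : blk m, a != 0 ->
  (#|[set x | fder f a x == c]| <= 4)%N.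
Proof.
rewrite /diff_uniform /diff_delta => h a c a0; rewrite -h.
apply: leq_trans (@leq_bigmax_cond _ (fun a : blk m => a != 0) _ a a0).
exact: (@leq_bigmax _ (fun c => #|[set x | fder f a x == c]|) c).
Qed.

Lemma card_vs m (H : {vspace blk m}) : #|[set x | x \in H]| = (2 ^ \dim H)%N.
Proof. by rewrite cardsE card_vspace card_Fp. Qed.

Lemma HL m (g : {perm blk m}) (H K : {vspace blk m}) : nhat g = 0%N ->
  (0 < \dim H)%N -> (\dim H).+1 = m -> \dim K = \dim H ->
  (forall x, x \in H -> g x \in K) -> False.
Proof.
move=> hn dH0 dHm dKH gHK.
have comp : forall x, x \notin H -> g x \notin K.
  move=> x xH; apply/negP => gxK.
  have : (#|g @: (x |: [set y | y \in H])| <= #|[set y | y \in K]|)%N.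
    apply: subset_leq_card; apply/subsetP => _ /imsetP[y yA ->]; move: yA; rewrite !inE.
    by case/predU1P => [->|yH]; [rewrite gxK | rewrite gHK].
  rewrite card_imset; last exact: perm_inj.
  rewrite cardsU1 !card_vs dKH inE xH /=.
  by rewrite add1n ltnn.
set a := vpick H.
have a0 : a != 0 by rewrite vpick0 -dimv_eq0 -lt0n.
have aH : a \in H := memv_pick H.
have dK : (\dim K).+1 = \dim {: blk m} by rewrite dimblk dKH.
have fK : forall x, fder g a x \in K.
  move=> x; rewrite /fder; case: (boolP (x \in H)) => xH.
    by rewrite memvD ?gHK ?memvD.
  apply: I2 => //; last exact: comp.
  apply: comp; apply: contra xH => xaH.
  by rewrite -[x]addr0 -(addvv2 a) addrA memvD.
have KF : K != fullv.
  apply/eqP => e; move: dK; rewrite e; move/eqP; by rewrite eqn_leq ltnn.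
have [q q0 qK] := orth KF.
apply: (nhat0P hn a0 q0) => x.
by rewrite !qK.
Qed.

Definition ein b m (i : 'I_b) (x : blk m) : VV b m := [ffun j => if j == i then x else 0].
Lemma ein_lin b m i : linear (@ein b m i).
Proof. move=> c x y; apply/ffunP => j; rewrite !ffunE; case: eqP => _ //; by rewrite scaler0 addr0. Qed.
HB.instance Definition _ b m i := GRing.isLinear.Build 'F_2 (blk m) (VV b m) _ (@ein b m i) (ein_lin i).

Lemma mem_coset b m (W : {vspace VV b m}) v x : (x \in coset W v) = (x + v \in W).
Proof.
apply/imsetP/idP => [[w wW ->]|xv]; first by rewrite -addrA addvv2 addr0.
by exists (x + v); rewrite // -addrA addvv2 addr0.
Qed.

Lemma addKv2 (V : lmodType 'F_2) (x y : V) : x + y + y = x.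
Proof. by rewrite -addrA addvv2 addr0. Qed.

Lemma addKv2' (V : lmodType 'F_2) (x y z : V) : x + y + (y + z) = x + z.
Proof. by rewrite addrA addKv2. Qed.

Lemma F2_eq (V : lmodType 'F_2) (x y : V) : x + y = 0 -> x = y.
Proof. by move=> h; rewrite -[x](addKv2 x y) h add0r. Qed.

Section Main.
Variables (b m : nat) (g : 'I_b -> {perm blk m}) (U W1 W2 W : {vspace VV b m}) (vbar : VV b m).
Hypotheses (hb : (1 < b)%N) (hm : (4 <= m)%N) (hg0 : parmap g 0 = 0)
  (hdu : forall i, diff_uniform (g i) 4) (hn : forall i, nhat (g i) = 0%N)
  (hU : \dim U = (m * b).-1) (hW1 : (W1 <= U)%VS) (hvbar : vbar \notin U)
  (hmaps : maps_onto (parmap g) (LApart U W1 W2 vbar) (Lpart W)).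

Local Notation gam := (parmap g).

Lemma g0 i : g i 0 = 0.
Proof. by move/ffunP: hg0 => /(_ i); rewrite !ffunE. Qed.

Lemma gamE v i : gam v i = g i (v i).
Proof. by rewrite ffunE. Qed.

Lemma gam_inj : injective gam.
Proof. move=> x y /ffunP h; apply/ffunP => i; move: (h i); rewrite !gamE; exact: perm_inj. Qed.

Lemma dimU1 : (\dim U).+1 = \dim {: VV b m}.
Proof. by rewrite dimV hU prednK // muln_gt0 (leq_trans _ hm) // (ltn_trans _ hb). Qed.

Lemma I2U x y : x \notin U -> y \notin U -> x + y \in U.
Proof. exact: I2 dimU1. Qed.

Lemma block_img X : X \in LApart U W1 W2 vbar -> exists y, gam @: X = coset W y.
Proof.
move=> XL; have : gam @: X \in Lpart W.
  by rewrite -hmaps; apply/imsetP; exists X.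
by case/imsetP => y _ ->; exists y.
Qed.

Lemma block_pair X x x' : X \in LApart U W1 W2 vbar -> x \in X -> x' \in X ->
  gam x + gam x' \in W.
Proof.
move=> XL xX x'X; have [y hy] := block_img XL.
have : gam x \in coset W y by rewrite -hy; apply/imsetP; exists x.
have : gam x' \in coset W y by rewrite -hy; apply/imsetP; exists x'.
rewrite !mem_coset => h1 h2; have := memvD h2 h1.
by rewrite addrACA addvv2 addr0.
Qed.

Lemma block_onto X x y : X \in LApart U W1 W2 vbar -> x \in X -> y + gam x \in W ->
  exists2 x', x' \in X & gam x' = y.
Proof.
move=> XL xX yx; have [y0 hy] := block_img XL.
have : gam x \in coset W y0 by rewrite -hy; apply/imsetP; exists x.
rewrite mem_coset => h.
have : y \in coset W y0.
  by rewrite mem_coset; have := memvD yx h; rewrite addKv2'.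
by rewrite -hy => /imsetP[x' x'X ->]; exists x'.
Qed.

Lemma LA1 v : v \in U -> coset W1 v \in LApart U W1 W2 vbar.
Proof. by move=> vU; apply/setUP; left; apply/imsetP; exists v. Qed.

Lemma LA2 : coset W2 (vbar + 0) \in LApart U W1 W2 vbar.
Proof. by apply/setUP; right; apply/imsetP; exists 0; rewrite ?mem0v. Qed.

Lemma M1 v w : v \in U -> w \in W1 -> gam (w + v) + gam v \in W.
Proof.
move=> vU wW; apply: (block_pair (LA1 vU)); rewrite mem_coset ?addKv2 //.
by rewrite addvv2 mem0v.
Qed.

Lemma gam0 : gam 0 = 0.
Proof. exact: hg0. Qed.

Lemma M1' y : y \in W -> exists2 w, w \in W1 & gam w = y.
Proof.
move=> yW.
have h1 : (0 : VV b m) \in coset W1 0 by rewrite mem_coset addr0 mem0v.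
have h2 : y + gam 0 \in W by rewrite gam0 addr0.
have [x' x'X <-] := block_onto (LA1 (mem0v U)) h1 h2.
by exists x' => //; move: x'X; rewrite mem_coset addr0.
Qed.

Lemma M2 w : w \in W2 -> gam (w + vbar) + gam vbar \in W.
Proof.
move=> wW; apply: (block_pair LA2); rewrite mem_coset addr0 ?addKv2 //.
by rewrite addvv2 mem0v.
Qed.

Lemma M2' t : t \in W -> exists2 w, w \in W2 & gam (w + vbar) = t + gam vbar.
Proof.
move=> tW.
have h1 : vbar \in coset W2 (vbar + 0) by rewrite mem_coset addr0 addvv2 mem0v.
have h2 : t + gam vbar + gam vbar \in W by rewrite addKv2.
have [x' x'X e] := block_onto LA2 h1 h2.
exists (x' + vbar); last by rewrite addKv2.
by move: x'X; rewrite mem_coset addr0.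
Qed.

Lemma einE (i : 'I_b) (x : blk m) j : ein i x j = if j == i then x else 0.
Proof. by rewrite ffunE. Qed.

Lemma ein_ii (i : 'I_b) (x : blk m) : ein i x i = x.
Proof. by rewrite einE eqxx. Qed.

Lemma ein0 (i : 'I_b) : ein i (0 : blk m) = 0 :> VV b m.
Proof. by apply/ffunP => j; rewrite !ffunE; case: eqP. Qed.

Lemma einD (i : 'I_b) (x y : blk m) : ein i (x + y) = ein i x + ein i y :> VV b m.
Proof. by apply/ffunP => j; rewrite !ffunE; case: eqP; rewrite ?addr0. Qed.

Lemma gam_ein (i : 'I_b) (x : blk m) : gam (ein i x) = ein i (g i x).
Proof. apply/ffunP => j; rewrite gamE !einE; case: eqP => [->|_] //; exact: g0. Qed.

Lemma ein_inj (i : 'I_b) : injective (@ein b m i).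
Proof. by move=> x y /ffunP/(_ i); rewrite !ein_ii. Qed.

Lemma AB (i : 'I_b) (x : blk m) : (ein i x \in W1) = (ein i (g i x) \in W).
Proof.
apply/idP/idP => h.
  by have := M1 (mem0v U) h; rewrite addr0 gam0 addr0 gam_ein.
have [w wW e] := M1' h; rewrite -gam_ein in e.
by rewrite -(gam_inj e).
Qed.

Definition Ai (i : 'I_b) : {vspace blk m} := (linfun (@ein b m i) @^-1: W1)%VS.
Definition Bi (i : 'I_b) : {vspace blk m} := (linfun (@ein b m i) @^-1: W)%VS.

Lemma memA (i : 'I_b) (x : blk m) : (x \in Ai i) = (ein i x \in W1).
Proof. by rewrite -memv_preim lfunE. Qed.
Lemma memB (i : 'I_b) (x : blk m) : (x \in Bi i) = (ein i x \in W).
Proof. by rewrite -memv_preim lfunE. Qed.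

Lemma dimAB (i : 'I_b) : \dim (Ai i) = \dim (Bi i).
Proof.
have : #|[set x | x \in Ai i]| = #|[set x | x \in Bi i]|.
  rewrite -(card_imset _ (@perm_inj _ (g i))); apply: eq_card => y; rewrite !inE.
  apply/imsetP/idP => [[x]|yB]; first by rewrite inE memA AB => ? ->; rewrite memB.
  exists ((g i)^-1%g y); rewrite ?permKV // inE memA AB permKV -memB //.
rewrite !card_vs => /eqP; rewrite eqn_exp2l // => /eqP ->. done.
Qed.

Lemma pairP (i : 'I_b) w v (d : blk m) : w \in W1 -> v \in U -> v + ein i d \in U ->
  fder (g i) (w i) (v i) + fder (g i) (w i) (v i + d) \in Bi i.
Proof.
move=> wW vU vdU; rewrite memB.
have := memvD (M1 vU wW) (M1 vdU wW).
congr (_ \in W); apply/ffunP => j; rewrite !ffunE /fder.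
case: eqP => [->|_]; first by rewrite ![w i + _]addrC.
rewrite !addr0; exact: addvv2.
Qed.

Lemma dotp_eq (q x y : blk m) : dotp (x + y) q = 0 -> dotp x q = dotp y q.
Proof.
rewrite dotpDl; case: (F2_cases (dotp x q)) => ->; case: (F2_cases (dotp y q)) => -> //.
Qed.

Lemma caseA (i : 'I_b) w : (forall x, ein i x \in U) -> w \in W1 -> w i != 0 ->
  forall y, y \in Bi i.
Proof.
move=> hU' wW a0.
case: (eqVneq (Bi i) fullv) => [-> y|BF]; first exact: memvf.
have [q q0 qB] := orth BF; exfalso.
apply: (nhat0P (hn i) a0 q0) => x; symmetry; apply: dotp_eq; apply: qB.
have := pairP (i := i) (d := x) wW (mem0v U); rewrite add0r !ffunE add0r; apply; exact: hU'.
Qed.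

Lemma caseB (i : 'I_b) (w : VV b m) (x0 : blk m) (r : VV b m) : ein i x0 \notin U -> r i = 0 -> r \notin U ->
  w \in W1 -> w i != 0 -> forall y, y \in Bi i.
Proof.
move=> x0U ri rU wW a0.
case: (eqVneq (Bi i) fullv) => [-> y|BF]; first exact: memvf.
exfalso; set a := w i.
have cl1 : forall x, ein i x \in U -> fder (g i) a 0 + fder (g i) a x \in Bi i.
  move=> x xU; have := pairP (i := i) (d := x) wW (mem0v U).
  by rewrite add0r !ffunE add0r; apply.
have cl2 : forall x, ein i x \notin U -> fder (g i) a x0 + fder (g i) a x \in Bi i.
  move=> x xU.
  have vU : ein i x0 + r \in U := I2U x0U rU.
  have := pairP (i := i) (d := x + x0) wW vU.
  have -> : ein i x0 + r + ein i (x + x0) = ein i x + r.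
    rewrite einD [ein i x + _]addrC addrA -[ein i x0 + r + ein i x0]addrAC addvv2 add0r.
    by rewrite addrC.
  have e : x0 + (x + x0) = x by rewrite addrC addKv2.
  rewrite !ffunE ri addr0 eqxx e; apply; exact: I2U xU rU.
set y0 := fder (g i) a 0; set y1 := fder (g i) a x0.
case: (eqVneq (Bi i + <[y0 + y1]>)%VS fullv) => [CF|CF].
  have y01 : y0 + y1 \notin Bi i.
    apply: contra BF => h; rewrite -CF eq_sym; apply/eqP/addv_idPl; by rewrite -memvE.
  have dB : (\dim (Bi i)).+1 = m by rewrite -(dim_addline y01) CF dimblk.
  apply: (HL (hn i) (H := Ai i) (K := Bi i)).
  - by rewrite dimAB -ltnS dB (leq_trans _ hm).
  - by rewrite dimAB.
  - by rewrite dimAB.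
  - by move=> x; rewrite memA memB AB.
have [q q0 qC] := orth CF.
have qB : forall u, u \in Bi i -> dotp u q = 0.
  by move=> u uB; apply: qC; apply: (subvP (addvSl _ _)).
have q01 : dotp (y0 + y1) q = 0.
  by apply: qC; apply: (subvP (addvSr _ _)); apply: memv_line.
apply: (nhat0P (hn i) a0 q0) => x.
case: (boolP (ein i x \in U)) => xU.
  by symmetry; apply: dotp_eq; exact: qB _ (cl1 x xU).
have e1 := dotp_eq (qB _ (cl2 x xU)); have e2 := dotp_eq q01.
by rewrite -e1 -e2.
Qed.

Lemma decomp (w : VV b m) : w = \sum_j ein j (w j).
Proof.
apply/ffunP => k; rewrite sum_ffunE (bigD1 k) //= big1 => [|j jk].
  by rewrite ffunE eqxx addr0.
by rewrite ffunE eq_sym (negbTE jk).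
Qed.

Definition Ui (i : 'I_b) : {vspace blk m} := (linfun (@ein b m i) @^-1: U)%VS.
Lemma memUi (i : 'I_b) (x : blk m) : (x \in Ui i) = (ein i x \in U).
Proof. by rewrite -memv_preim lfunE. Qed.

Lemma caseC (i : 'I_b) (w : VV b m) (x0 : blk m) : ein i x0 \notin U ->
  (forall r : VV b m, r i = 0 -> r \in U) -> w \in W1 -> w i != 0 -> False.
Proof.
move=> x0U hr wW a0.
have hj : forall j, j != i -> ein j (w j) \in W1.
  move=> j ji; case: (eqVneq (w j) 0) => [->|wj0]; first by rewrite ein0 mem0v.
  rewrite AB -memB; apply: (caseA (i := j) (w := w)) => // x.
  by apply: hr; rewrite ffunE eq_sym (negbTE ji).
have sA : w i \in Ai i.
  rewrite memA.
  have -> : ein i (w i) = w - \sum_(j | j != i) ein j (w j).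
    by rewrite {2}(decomp w) (bigD1 i) //= addrK.
  by rewrite memvB // memv_suml // => j; exact: hj.
set s := w i.
have x0Ui : x0 \notin Ui i by rewrite memUi.
have dUi : (\dim (Ui i)).+1 = m.
  have full : (Ui i + <[x0]> = fullv)%VS.
    apply: subv_anti; rewrite subvf /=; apply/subvP => x _.
    case: (boolP (ein i x \in U)) => xU.
      by rewrite -[x]addr0; apply: memv_add; rewrite ?memUi ?mem0v.
    rewrite -[x](addKv2 x x0); apply: memv_add; last exact: memv_line.
    by rewrite memUi einD; apply: I2U.
  by rewrite -(dim_addline x0Ui) full dimblk.
have AU : (Ai i <= Ui i)%VS.
  by apply/subvP => x; rewrite memA memUi => h; apply: (subvP hW1).
set t := \dim (Bi i).
have tA : \dim (Ai i) = t := dimAB i.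
have cnt : (2 ^ \dim (Ui i) <= (2 ^ t - 1) * 4)%N.
  rewrite -card_vs.
  have := @count_fibers _ _ (fder (g i) s) [set x | x \in Ui i]
     ([set y | y \in Bi i] :\ 0) 4.
  have -> : #|[set y | y \in Bi i] :\ 0| = (2 ^ t - 1)%N.
    by have := cardsD1 0 [set y | y \in Bi i]; rewrite card_vs inE mem0v add1n => ->; rewrite subn1.
  apply.
  - move=> x; rewrite !inE memUi => xU; apply/andP; split.
      apply: contraNneq a0 => /F2_eq /perm_inj e.
      by apply/eqP; move: e; rewrite /s => e; rewrite -(addKr x (w i)) e addNr.
    have sW : ein i s \in W1 by rewrite -memA.
    have := M1 xU sW; rewrite -einD !gam_ein -einD -memB.
    by rewrite /fder [x + s]addrC.
  - move=> c; apply: leq_trans (du4 (hdu i) c a0).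
    by apply: subset_leq_card; apply/subsetP => x; rewrite !inE => /andP[].
have lt : (\dim (Ui i) < t.+2)%N.
  rewrite -(ltn_exp2l _ _ (ltnSn 1)); apply: leq_ltn_trans cnt _.
  have -> : (2 ^ t.+2 = 2 ^ t * 4)%N by rewrite !expnS mulnA mulnC.
  by rewrite ltn_mul2r /= subn1 ltn_predL expn_gt0.
have tle : (t <= \dim (Ui i))%N by rewrite -tA; exact: dimvS AU.
case: (eqVneq t (\dim (Ui i))) => [tE|tne].
  apply: (HL (hn i) (H := Ai i) (K := Bi i)).
  - by rewrite tA tE -ltnS dUi (leq_trans _ hm).
  - by rewrite tA tE.
  - by rewrite tA.
  - by move=> x; rewrite memA memB AB.
have tU : t.+1 = \dim (Ui i).
  apply/eqP; rewrite eqn_leq; apply/andP; split; last by rewrite -ltnS.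
  by rewrite ltn_neqAle tne tle.
have [c cU cA] : exists2 c, c \in Ui i & c \notin Ai i.
  apply/subvPn; apply: contra tne => sub.
  by rewrite eqn_leq tle -tA dimvS.
have gcB : g i c \notin Bi i by rewrite memB -AB -memA.
apply: (HL (hn i) (H := (Ai i + <[c]>)%VS) (K := (Bi i + <[g i c]>)%VS)).
- by rewrite dim_addline.
- by rewrite dim_addline // tA tU.
- by rewrite !dim_addline // tA.
move=> x /memv_addP[a' a'A [l /vlineP[k ->] ->]].
case: (F2_cases k) => ->.
  rewrite scale0r addr0; apply: (subvP (addvSl _ _)).
  by rewrite memB -AB -memA.
rewrite scale1r.
have cU' : ein i c \in U by rewrite -memUi.
have a'W : ein i a' \in W1 by rewrite -memA.
have := M1 cU' a'W; rewrite -einD !gam_ein -einD -memB => h.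
rewrite -[g i (a' + c)](addKv2 _ (g i c)).
by apply: memv_add h (memv_line _).
Qed.

Lemma key (i : 'I_b) (w : VV b m) : w \in W1 -> w i != 0 -> forall x, ein i x \in W1.
Proof.
move=> wW a0.
suff hB : forall y, y \in Bi i by move=> x; rewrite AB -memB.
case: (boolP [forall x, ein i x \in U]) => [/forallP hA|].
  exact: caseA hA wW a0.
rewrite negb_forall => /existsP[x0 x0U].
case: (boolP [exists r : VV b m, (r i == 0) && (r \notin U)]).
  by case/existsP => r /andP[/eqP ri rU]; exact: caseB x0U ri rU wW a0.
rewrite negb_exists => /forallP hr.
exfalso; apply: (caseC x0U _ wW a0) => r ri.
by have := hr r; rewrite ri eqxx /= negbK.
Qed.

Definition II := [set i : 'I_b | [exists w : VV b m, (w \in W1) && (w i != 0)]].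

Lemma W1char v : (v \in W1) = [forall i, (i \notin II) ==> (v i == 0)].
Proof.
apply/idP/forallP => [vW i|h].
  apply/implyP => iI; apply: contraR iI => vi; rewrite inE; apply/existsP; exists v.
  by rewrite vW.
rewrite (decomp v) memv_suml // => i _.
case: (boolP (i \in II)) => [|iI].
  by rewrite inE => /existsP[w /andP[wW wi]]; exact: key wW wi _.
by have := implyP (h i) iI => /eqP ->; rewrite ein0 mem0v.
Qed.

Lemma Wchar v : (v \in W) = (v \in W1).
Proof.
apply/idP/idP => [vW|vW].
  have [w wW <-] := M1' vW; rewrite W1char; apply/forallP => i; apply/implyP => iI.
  move: wW; rewrite W1char => /forallP/(_ i); rewrite iI /= => /eqP wi.
  by rewrite gamE wi g0.
pose w := [ffun i => (g i)^-1%g (v i)].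
have gw : gam w = v by apply/ffunP => i; rewrite gamE ffunE permKV.
have wW : w \in W1.
  rewrite W1char; apply/forallP => i; apply/implyP => iI.
  move: vW; rewrite W1char => /forallP/(_ i); rewrite iI /= => /eqP vi.
  by rewrite ffunE vi -{1}(g0 i) permK.
by have := M1 (mem0v U) wW; rewrite addr0 gam0 addr0 gw.
Qed.

Lemma W21 : W2 = W1.
Proof.
apply/vspaceP => v; apply/idP/idP => [vW|vW].
  have := M2 vW; rewrite Wchar W1char => /forallP h.
  rewrite W1char; apply/forallP => i; apply/implyP => iI.
  have := implyP (h i) iI; rewrite !ffunE => /eqP/F2_eq/perm_inj e.
  by apply/eqP; rewrite -(addKv2 (v i) (vbar i)) e addvv2.
have tW : gam (v + vbar) + gam vbar \in W.
  rewrite Wchar W1char; apply/forallP => i; apply/implyP => iI.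
  move: vW; rewrite W1char => /forallP/(_ i); rewrite iI /= => /eqP vi.
  by rewrite !ffunE vi add0r addvv2.
have [w wW e] := M2' tW; rewrite addKv2 in e.
have := gam_inj e => /addIr <-; exact: wW.
Qed.

Lemma main_res : ~~ trivial_part (Lpart W) ->
  [/\ wall W, wall W1, W = W1, W1 = W2 & LApart U W1 W2 vbar = Lpart W1].
Proof.
move=> hnt.
have WW1 : W = W1 by apply/vspaceP => v; rewrite Wchar.
have [v vW v0] : exists2 v, v \in W & v != 0.
  case: (boolP [exists v : VV b m, (v \in W) && (v != 0)]).
    by case/existsP => v /andP[? ?]; exists v.
  rewrite negb_exists => /forallP h; exfalso; move/negP: hnt; apply.
  have cs : forall v, coset W v = [set v].
    move=> u; apply/setP => y; rewrite mem_coset inE.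
    apply/idP/eqP => [h'|->]; last by rewrite addvv2 mem0v.
    by have := h (y + u); rewrite h' /= negbK => /eqP/F2_eq.
  rewrite /trivial_part; apply/orP; left; apply/eqP/setP => X.
  by apply/imsetP/imsetP => -[u _ ->]; exists u; rewrite ?cs.
have [i vi] : exists i, v i != 0.
  case: (boolP [exists i, v i != 0]) => [/existsP//|].
  rewrite negb_exists => /forallP h; exfalso; move/eqP: v0; apply.
  by apply/ffunP => i; rewrite ffunE; have := h i; rewrite negbK => /eqP.
have I0 : II != set0.
  apply/set0Pn; exists i; rewrite inE; apply/existsP; exists v.
  by rewrite -Wchar vW vi.
have IT : II != setT.
  apply/eqP => IT.
  have : vbar \in W1 by rewrite W1char; apply/forallP => j; rewrite IT inE.
  by move/(subvP hW1); rewrite (negbTE hvbar).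
have wall1 : wall W1 by exists II; split => // u; exact: W1char.
split => //; first by rewrite WW1.
  by rewrite W21.
rewrite W21; apply/setP => X; apply/idP/idP.
  by case/setUP => /imsetP[u uU ->]; apply/imsetP; [exists u | exists (vbar + u)].
case/imsetP => u _ ->; case: (boolP (u \in U)) => uU; apply/setUP; [left|right]; apply/imsetP.
  by exists u.
exists (u + vbar); first exact: I2U uU hvbar.
by rewrite addrC addKv2.
Qed.

End Main.

Theorem lemma3p16 (b m : nat) (g : 'I_b -> {perm 'rV['F_2]_m})
  (U W1 W2 W : {vspace {ffun 'I_b -> 'rV['F_2]_m}})
  (vbar : {ffun 'I_b -> 'rV['F_2]_m}) :
  (1 < b)%N -> (4 <= m)%N ->
  parmap g 0 = 0 ->
  (forall i, diff_uniform (g i) 4) ->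
  (forall i, nhat (g i) = 0%N) ->
  \dim U = (m * b).-1 ->
  (W1 <= U)%VS -> (W2 <= U)%VS ->
  vbar \notin U ->
  ~~ trivial_part (Lpart W) ->
  maps_onto (parmap g) (LApart U W1 W2 vbar) (Lpart W) ->
  [/\ wall W, wall W1, W = W1, W1 = W2 & LApart U W1 W2 vbar = Lpart W1].
Proof.
move=> hb hm hg0 hdu hn hU hW1 hW2 hvbar hnt hmaps.
exact: (main_res hb hm hg0 hdu hn hU hW1 hvbar hmaps hnt).
Qed.
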